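(* Let $\alpha\colon\Gamma\curvearrowright X$ be an action of a countable group on a compact, Hausdorff, $0$-dimensional space, and assume there is no $\alpha$-invariant Radon probability measure on $X$. Then $\alpha$ has the dynamical comparison property if and only if $\alpha$ is minimal and $a\le b$ for all nonzero $a,b\in T(\alpha)$.
   Context: Clopen type semigroup: let $Y = X\times\mathbb N$, and let $\tilde\Gamma=\Gamma\times\mathfrak S$ ($\mathfrak S$ the permutation group of $\mathbb N$) act on $Y$ by $(\gamma,\sigma)(x,n)=(\alpha(\gamma)x,\sigma(n))$. A clopen $A\subseteq Y$ is bounded if $A\cap(X\times\{n\})=\emptyset$ for all large $n$. Bounded clopen $A,B$ are equidecomposable if there are clopen $A_1,\dots,A_n$ and $\tilde\gamma_i\in\tilde\Gamma$ with $A=\bigsqcup_i A_i$, $B=\bigsqcup_i\tilde\gamma_iA_i$. $T(\alpha)$ is the set of classes $[A]$, with $[A]+[B]=[A'\sqcup B']$ for disjoint representatives; $0=[\emptyset]$. $a\le b$ iff $b=a+c$ for some $c$. For clopen $A\subseteq X$, $[A]$ denotes $[A\times\{0\}]$. The action $\alpha$ has dynamical comparison if for all nonempty clopen $A,B\subseteq X$ such that $\mu(A)<\mu(B)$ for every $\alpha$-invariant Radon probability measure $\mu$ on $X$, one has $[A]\le[B]$. The action is minimal if every orbit is dense. *)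

(* Defs.v *)
From HB Require Import structures.
From mathcomp Require Import all_boot all_order all_algebra.
From mathcomp Require Import all_classical all_reals all_analysis.
From mathcomp Require Import Rstruct.
Set Implicit Arguments.
Unset Strict Implicit.
Unset Printing Implicit Defensive.
Import Order.TTheory GRing.Theory Num.Theory.
Local Open Scope classical_set_scope.

Section Defs.
Variables (G : groupType) (X : topologicalType) (alpha : G -> X -> X).

Definition zero_dim : Prop :=
  forall (U : set X) (x : X), open U -> U x ->
    exists V : set X, [/\ clopen V, V x & V `<=` U].

Definition is_continuous_action : Prop :=
  [/\ forall g, continuous (alpha g),
      alpha 1%g = id
    & forall g h, alpha (g * h)%g = alpha g \o alpha h].

Definition borel : set (set X) := <<s @open X >>.

Definition radon_probability (mu : set X -> \bar Rdefinitions.R) : Prop :=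
  [/\ mu set0 = 0%E /\ (forall E, borel E -> (0 <= mu E)%E),
      (forall F : nat -> set X, (forall i, borel (F i)) -> trivIset setT F ->
         (\sum_(0 <= i < n) mu (F i))%E @[n --> \oo] --> mu (\bigcup_n F n)),
      mu setT = 1%E,
      (forall E, borel E ->
         mu E = ereal_inf [set mu U | U in [set U | open U /\ E `<=` U]])
    & (forall U, open U ->
         mu U = ereal_sup [set mu K | K in [set K | compact K /\ K `<=` U]])].

Definition invariant_measure (mu : set X -> \bar Rdefinitions.R) : Prop :=
  forall g E, borel E -> mu (alpha g @` E) = mu E.

Definition minimal_action : Prop :=
  forall x : X, closure [set alpha g x | g in [set: G]] = [set: X].

(* The space Y = X x N (N discrete) and the action of G x Sym(N) on it *)
Definition actY (g : G) (s : nat -> nat) (p : X * nat) : X * nat :=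
  (alpha g p.1, s p.2).

Definition bounded_set (A : set (X * nat)) : Prop :=
  exists N : nat, forall x n, A (x, n) -> (n < N)%N.

Definition bclopen (A : set (X * nat)) : Prop := clopen A /\ bounded_set A.

Definition equidec (A B : set (X * nat)) : Prop :=
  exists (n : nat) (P : 'I_n -> set (X * nat)) (g : 'I_n -> G)
         (s : 'I_n -> nat -> nat),
    [/\ forall i, clopen (P i),
        forall i, bijective (s i),
        A = \bigcup_i P i /\ trivIset setT P
      & B = \bigcup_i (actY (g i) (s i) @` P i) /\
        trivIset setT (fun i => actY (g i) (s i) @` P i)].

(* [A] <= [B] in T(alpha): [B] = [A] + c for some c, i.e. there are disjoint
   bounded clopen A' ~ A and C' (representing c) with A' u C' ~ B *)
Definition T_le (A B : set (X * nat)) : Prop :=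
  exists A' C' : set (X * nat),
    [/\ bclopen A', bclopen C', A' `&` C' = set0,
        equidec A A' & equidec (A' `|` C') B].

(* the class [A] of a clopen A in X is [A x {0}] *)
Definition at0 (A : set X) : set (X * nat) := A `*` [set 0%N].

Definition dynamical_comparison : Prop :=
  forall A B : set X, clopen A -> clopen B -> A !=set0 -> B !=set0 ->
    (forall mu, radon_probability mu -> invariant_measure mu ->
       (mu A < mu B)%E) ->
    T_le (at0 A) (at0 B).

End Defs.

(* Main.v *)
Require Import Defs.
From HB Require Import structures.
From mathcomp Require Import all_boot all_order all_algebra.
From mathcomp Require Import all_classical all_reals all_analysis.
From mathcomp Require Import Rstruct.
Set Implicit Arguments.
Unset Strict Implicit.
Unset Printing Implicit Defensive.
Import Order.TTheory GRing.Theory Num.Theory.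
Local Open Scope classical_set_scope.

Section Topo.
Variables (X : topologicalType).

Lemma fst_cont : continuous (@fst X nat).
Proof.
case=> a b W /= Wn; exists (W, [set: nat]); first by split => //; exact: filterT.
by case=> x y [] /=.
Qed.

Lemma snd_cont : continuous (@snd X nat).
Proof.
case=> a b W /= Wn; exists ([set: X], W); first by split => //; exact: filterT.
by case=> x y [] /=.
Qed.

Lemma lev_clopen (S : set X) (k : nat) : clopen S -> clopen (S `*` [set k]).
Proof.
move=> cS.
have -> : S `*` [set k] = (@fst X nat @^-1` S) `&` (@snd X nat @^-1` [set k]).
  by apply/seteqP; split => -[x n] /=.
apply: clopenI; apply: preimage_clopen; try exact: fst_cont; try exact: snd_cont; first by [].
by split; [exact: discrete_open|exact: discrete_closed].
Qed.

Lemma pairf_cont (f : X -> X) (s : nat -> nat) : continuous f ->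
  continuous (fun p : X * nat => (f p.1, s p.2)).
Proof.
move=> cf [a b] W /= [[U V]] /= [Ua Vb] UVW.
exists (f @^-1` U, [set b]); first by split; [exact: cf | exact: discrete_set1].
by case=> x y /= [Ux ->]; apply: UVW; split => //; exact: nbhs_singleton.
Qed.

Lemma slice_clopen (B : set (X * nat)) m : clopen B -> clopen [set x | B (x, m)].
Proof.
move=> cB; have -> : [set x | B (x, m)] = (fun x : X => (x, m)) @^-1` B by [].
apply: preimage_clopen => //.
move=> x W /= [[U V]] /= [Ux Vm] UVW.
apply: filterS Ux => y Uy /=; apply: UVW; split => //; exact: nbhs_singleton.
Qed.

End Topo.

Definition swapn (k m n : nat) : nat := if n == k then m else if n == m then k else n.

Lemma swapnK k m : cancel (swapn k m) (swapn k m).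
Proof.
move=> n; rewrite /swapn.
case: (eqVneq n k) => [->|nk]; first by rewrite eqxx; case: (eqVneq m k) => [->|]; rewrite ?eqxx.
case: (eqVneq n m) => [->|nm]; first by rewrite eqxx.
by rewrite (negbTE nk) (negbTE nm).
Qed.

Section Inj.
Variables (G : groupType) (X : topologicalType) (alpha : G -> X -> X).
Hypothesis act : is_continuous_action alpha.

Lemma act_cont g : continuous (alpha g). Proof. by case: act. Qed.
Lemma act1 x : alpha 1%g x = x. Proof. by case: act => _ -> _. Qed.
Lemma actM g h x : alpha (g * h)%g x = alpha g (alpha h x).
Proof. by case: act => _ _ ->. Qed.
Lemma actK g x : alpha (g^-1)%g (alpha g x) = x.
Proof. by rewrite -actM mulVg act1. Qed.
Lemma act_inj g : injective (alpha g).
Proof. by move=> x y /(congr1 (alpha (g^-1)%g)); rewrite !actK. Qed.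

Lemma actY_cont g s : continuous (actY alpha g s).
Proof. exact: (@pairf_cont X (alpha g) s (@act_cont g)). Qed.

Lemma actY_inj g s : injective s -> injective (actY alpha g s).
Proof.
move=> si [x n] [y m] [] /act_inj -> /si -> //.
Qed.

Lemma actY_image_clopen g s (P : set (X * nat)) : bijective s -> clopen P ->
  clopen (actY alpha g s @` P).
Proof.
case=> s' ss' s's cP.
have -> : actY alpha g s @` P = actY alpha (g^-1)%g s' @^-1` P.
  apply/seteqP; split.
    by move=> _ [[x n] Pp <-]; rewrite /actY /= actK ss'.
  move=> [x n] /= Pq; exists (alpha (g^-1)%g x, s' n) => //.
  by rewrite /actY /= -actM mulgV act1 s's.
by apply: preimage_clopen => //; exact: actY_cont.
Qed.

Definition injY (A B : set (X * nat)) : Prop :=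
  exists (I : finType) (c : X * nat -> I) (g : I -> G) (s : I -> nat -> nat),
  [/\ forall i, clopen (A `&` c @^-1` [set i]),
      forall i, bijective (s i),
      forall p q, A p -> A q -> actY alpha (g (c p)) (s (c p)) p = actY alpha (g (c q)) (s (c q)) q -> p = q
    & forall p, A p -> B (actY alpha (g (c p)) (s (c p)) p)].

Lemma injY_id A : clopen A -> injY A A.
Proof.
move=> cA; exists (unit : finType), (fun _ => tt), (fun _ => 1%g), (fun _ => id); split => //.
- by case; rewrite (_ : _ @^-1` _ = setT) ?setIT //; apply/seteqP; split => // -[].
- by move=> _; exists id.
- by move=> [x n] [y m] _ _; rewrite /actY /= !act1.
- by move=> [x n] An; rewrite /actY /= act1.
Qed.

Lemma injY_swap (S : set X) k m : clopen S -> injY (S `*` [set k]) (S `*` [set m]).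
Proof.
move=> cS; exists (unit : finType), (fun _ => tt), (fun _ => 1%g), (fun _ => swapn k m); split => //.
- by case; rewrite (_ : _ @^-1` _ = setT) ?setIT; [exact: lev_clopen|apply/seteqP; split => // -[]].
- by move=> _; exists (swapn k m); exact: swapnK.
- move=> [x n] [y n'] _ _; rewrite /actY /= !act1 => -[-> /(congr1 (swapn k m))].
  by rewrite !swapnK => ->.
- by move=> [x n] [/= Sx ->]; rewrite /actY /= act1 /swapn eqxx.
Qed.

Lemma injY_mono A B B' : B `<=` B' -> injY A B -> injY A B'.
Proof.
move=> BB' [I [c [g [s [H1 H2 H3 H4]]]]].
by exists I, c, g, s; split => // p /H4 /BB'.
Qed.

Lemma injY_sub A0 A B : A0 `<=` A -> clopen A0 -> injY A B -> injY A0 B.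
Proof.
move=> A0A cA0 [I [c [g [s [H1 H2 H3 H4]]]]].
exists I, c, g, s; split => //.
- move=> i; rewrite (_ : _ `&` _ = A0 `&` (A `&` c @^-1` [set i])); first exact: clopenI.
  by rewrite setIA (setIidl A0A).
- by move=> p q /A0A Ap /A0A Aq; exact: H3.
- by move=> p /A0A; exact: H4.
Qed.

Lemma injY_trans A B C : injY A B -> injY B C -> injY A C.
Proof.
move=> [I [c [g [s [H1 H2 H3 H4]]]]] [J [d [h [t [K1 K2 K3 K4]]]]].
pose phi p := actY alpha (g (c p)) (s (c p)) p.
exists (((I * J)%type : finType)), (fun p => (c p, d (phi p))),
  (fun ij => (h ij.2 * g ij.1)%g), (fun ij => t ij.2 \o s ij.1).
have E ij p : actY alpha (h ij.2 * g ij.1)%g (t ij.2 \o s ij.1) p =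
    actY alpha (h ij.2) (t ij.2) (actY alpha (g ij.1) (s ij.1) p).
  by rewrite /actY /= actM.
split.
- move=> [i j].
  rewrite (_ : _ `&` _ = (A `&` c @^-1` [set i]) `&`
     (actY alpha (g i) (s i) @^-1` (B `&` d @^-1` [set j]))).
    apply: clopenI => //; apply: preimage_clopen => //; exact: actY_cont.
  apply/seteqP; split.
    move=> p /= [Ap] [] <- <-; split => //; split => //; exact: H4.
  by move=> p /= [[Ap ci] [_ dj]]; split => //; rewrite /phi ci dj.
- by move=> [i j]; apply: bij_comp.
- move=> p q Ap Aq; rewrite !E /= => eq.
  apply: H3 => //; apply: K3 => //; exact: H4.
- move=> p Ap; rewrite E /=; apply: K4; exact: H4.
Qed.

Lemma injY_union A1 A2 B1 B2 : A1 `&` A2 = set0 -> B1 `&` B2 = set0 ->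
  injY A1 B1 -> injY A2 B2 -> injY (A1 `|` A2) (B1 `|` B2).
Proof.
move=> dA dB [I [c [g [s [H1 H2 H3 H4]]]]] [J [d [h [t [K1 K2 K3 K4]]]]].
pose e p : I + J := if pselect (A1 p) then inl (c p) else inr (d p).
pose gg (k : I + J) := match k with inl i => g i | inr j => h j end.
pose ss (k : I + J) := match k with inl i => s i | inr j => t j end.
have eA1 p : A1 p -> e p = inl (c p) by rewrite /e; case: pselect.
have eA2 p : A2 p -> e p = inr (d p).
  move=> A2p; rewrite /e; case: pselect => // A1p.
  by have : (A1 `&` A2) p by []; rewrite dA.
exists (((I + J)%type : finType)), e, gg, ss; split.
- case=> [i|j].
    rewrite (_ : _ `&` _ = A1 `&` c @^-1` [set i]) //.
    apply/seteqP; split => p /=.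
      move=> [ApU]; case: (pselect (A1 p)) => A1p; first by rewrite eA1 // => -[<-].
      by case: ApU => // A2p; rewrite eA2.
    by move=> [A1p <-]; split; [left|rewrite eA1].
  rewrite (_ : _ `&` _ = A2 `&` d @^-1` [set j]) //.
  apply/seteqP; split => p /=.
    move=> [[A1p|A2p]]; first by rewrite eA1.
    by rewrite eA2 // => -[->].
  by move=> [A2p <-]; split; [right|rewrite eA2].
- by case.
- move=> p q [A1p|A2p] [A1q|A2q].
  + rewrite (eA1 p A1p) (eA1 q A1q) /=; exact: H3.
  + rewrite (eA1 p A1p) (eA2 q A2q) /= => eq.
    have : (B1 `&` B2) (actY alpha (g (c p)) (s (c p)) p).
      by split; [exact: H4|rewrite eq; exact: K4].
    by rewrite dB.
  + rewrite (eA2 p A2p) (eA1 q A1q) /= => eq.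
    have : (B1 `&` B2) (actY alpha (g (c q)) (s (c q)) q).
      by split; [exact: H4|rewrite -eq; exact: K4].
    by rewrite dB.
  + rewrite (eA2 p A2p) (eA2 q A2q) /=; exact: K3.
- move=> p [A1p|A2p].
    by rewrite (eA1 p A1p) /=; left; exact: H4.
  by rewrite (eA2 p A2p) /=; right; exact: K4.
Qed.

End Inj.

Section Conv.
Variables (G : groupType) (X : topologicalType) (alpha : G -> X -> X).
Hypothesis act : is_continuous_action alpha.

Lemma injY_of_equidec A B : equidec alpha A B -> injY alpha A B.
Proof.
move=> [n [P [g [s [Pc sb [AU Pt] [BU It]]]]]].
pose c p : option 'I_n := match pselect (exists i, P i p) with
  | left h => Some (proj1_sig (cid h)) | right _ => None end.
have cP i p : P i p -> c p = Some i.
  move=> Pip; rewrite /c; case: pselect => [h|]; last by move=> nh; exfalso; apply: nh; exists i.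
  case: (cid h) => j /= Pjp; congr Some; apply: Pt => //; by exists p.
have AP p : A p -> exists i, P i p by rewrite AU => -[i _ Pi]; exists i.
pose gg (o : option 'I_n) := if o is Some i then g i else 1%g.
pose ss (o : option 'I_n) := if o is Some i then s i else id.
exists (option 'I_n : finType), c, gg, ss; split.
- case=> [i|].
    rewrite (_ : _ `&` _ = P i) //; apply/seteqP; split => p /=.
      by move=> [/AP [j Pj]]; rewrite (cP _ _ Pj) => -[<-].
    by move=> Pi; split; [rewrite AU; exists i|exact: cP].
  rewrite (_ : _ `&` _ = set0); first exact: clopen0.
  apply/seteqP; split => p //= [/AP [j Pj]]; by rewrite (cP _ _ Pj).
- by case => [i|] /=; [exact: sb | exists id].
- move=> p q /AP [i Pi] /AP [j Pj]; rewrite (cP _ _ Pi) (cP _ _ Pj) /= => eq.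
  have ij : i = j.
    apply: It => //; exists (actY alpha (g i) (s i) p); split; first by exists p.
    by rewrite eq; exists q.
  subst j; move: eq; apply: actY_inj => //; exact: bij_inj.
- move=> p /AP [i Pi]; rewrite (cP _ _ Pi) /= BU; exists i => //; by exists p.
Qed.

Lemma injY_of_Tle A B : T_le alpha A B -> injY alpha A B.
Proof.
move=> [A' [C' [[cA' _] _ _ e1 e2]]].
apply: (injY_trans act (injY_of_equidec e1)).
apply: (injY_sub (A := A' `|` C')); [by move=> p; left | exact: cA' | exact: injY_of_equidec].
Qed.

Lemma equidec_refl B : clopen B -> equidec alpha B B.
Proof.
move=> cB; exists 1%N, (fun _ => B), (fun _ => 1%g), (fun _ => id); split => //.
- by move=> _; exists id.
- split; first by apply/seteqP; split => [p Bp|p [_ _ //]]; exists ord0.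
  by move=> i j _ _ _; apply: val_inj; rewrite /= (ord1 i) (ord1 j).
- split; last by move=> i j _ _ _; apply: val_inj; rewrite /= (ord1 i) (ord1 j).
  apply/seteqP; split => [p Bp|p [_ _ [q Bq <-]]].
    by exists ord0 => //; exists p => //; rewrite /actY act1; case: p {Bp}.
  by rewrite /actY act1; case: q Bq.
Qed.

Lemma Tle_of_injY A B : bclopen B -> injY alpha A B -> T_le alpha A B.
Proof.
move=> [cB [N bN]] [I [c [g [s [H1 H2 H3 H4]]]]].
pose P (k : 'I_#|I|) := A `&` c @^-1` [set enum_val k].
pose B0 := \bigcup_k (actY alpha (g (enum_val k)) (s (enum_val k)) @` P k).
have B0B : B0 `<=` B by move=> _ [k _ [p [Ap /= ck] <-]]; rewrite -ck; exact: H4.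
have cB0 : clopen B0.
  split.
    apply: bigcup_open => k _.
    by case: (actY_image_clopen act (g (enum_val k)) (H2 (enum_val k)) (H1 (enum_val k))).
  apply: closed_bigcup; first exact: finite_finset.
  move=> k _.
  by case: (actY_image_clopen act (g (enum_val k)) (H2 (enum_val k)) (H1 (enum_val k))).
exists B0, (B `\` B0); split.
- by split => //; exists N => x n /B0B /bN.
- split; first by rewrite setDE; apply: clopenI => //; exact: clopenC.
  by exists N => x n [/bN].
- exact: setDIK.
- exists #|I|, P, (fun k => g (enum_val k)), (fun k => s (enum_val k)); split.
  + move=> k; exact: H1.
  + move=> k; exact: H2.
  + split.
      apply/seteqP; split => [p Ap|p [k _ []//]].
      by exists (enum_rank (c p)) => //; split => //=; rewrite enum_rankK.
    move=> i j _ _ [p [[_ /= ci] [_ /= cj]]].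
    by apply: enum_val_inj; rewrite -ci -cj.
  + split => //.
    move=> i j _ _ [_ [[p [Ap /= ci] <-] [q [Aq /= cj] eq]]].
    apply: enum_val_inj; rewrite -ci -cj; congr c; apply: H3 => //.
    by rewrite ci cj.
- by rewrite setDUK //; exact: equidec_refl.
Qed.
End Conv.

Section Dirac.
Variables (G : groupType) (X : topologicalType) (alpha : G -> X -> X).

Local Open Scope ereal_scope.

Definition dmu (x0 : X) (E : set X) : \bar Rdefinitions.R :=
  if `[< E x0 >] then 1 else 0.

Lemma dmu_le x0 (E U : set X) : (E x0 -> U x0) -> dmu x0 E <= dmu x0 U.
Proof.
move=> EU; rewrite /dmu; case: (asboolP (E x0)) => Ex; case: (asboolP (U x0)) => Ux //;
  try (by case: Ux; exact: EU); by rewrite ?lee01.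
Qed.

Lemma dmu_sum x0 (F : nat -> set X) : (forall i j, F i x0 -> F j x0 -> i = j) ->
  forall n, \sum_(0 <= i < n) dmu x0 (F i) =
    if `[< exists2 i, (i < n)%N & F i x0 >] then 1 else 0.
Proof.
move=> Fd; elim=> [|n IH].
  by rewrite big_geq //; case: asboolP => // -[i []].
rewrite big_nat_recr //= IH /dmu.
case: asboolP => [[i ilt Fi]|nF]; case: asboolP => [Fn|nFn].
- by have := Fd _ _ Fi Fn => eqi; move: ilt; rewrite eqi ltnn.
- rewrite adde0; case: asboolP => // -[]; exists i => //; by rewrite ltnS ltnW.
- rewrite add0e; case: asboolP => // -[]; by exists n.
- rewrite adde0; case: asboolP => // -[i]; rewrite ltnS leq_eqVlt => /orP [/eqP ->//|ilt Fi].
  by case: nF; exists i.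
Qed.

Lemma singleton_measure (x0 : X) : (forall x : X, x = x0) ->
  compact [set: X] ->
  exists mu, radon_probability mu /\ invariant_measure alpha mu.
Proof.
move=> one cT; exists (dmu x0).
have Eop (E : set X) : open E.
  case: (asboolP (E x0)) => Ex.
    suff -> : E = setT by exact: openT.
    by apply/seteqP; split => // x _; rewrite (one x).
  suff -> : E = set0 by exact: open0.
  by apply/seteqP; split => // x; rewrite (one x).
have Ecp (E : set X) : compact E.
  case: (asboolP (E x0)) => Ex.
    suff -> : E = setT by [].
    by apply/seteqP; split => // x _; rewrite (one x).
  suff -> : E = set0 by exact: compact0.
  by apply/seteqP; split => // x; rewrite (one x).
split; last first.
  move=> g E _; rewrite /dmu; case: asboolP => [[y Ey]|]; case: asboolP => //.
    by rewrite -(one y).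
  by move=> Ex []; exists x0 => //; rewrite (one (alpha g x0)).
split.
- split; first by rewrite /dmu; case: asboolP.
  by move=> E _; rewrite /dmu; case: asboolP.
- move=> F _ tF.
  have Fd i j : F i x0 -> F j x0 -> i = j.
    by move=> Fi Fj; apply: tF => //; exists x0.
  case: (pselect (exists i, F i x0)) => [[i0 Fi0]|nF].
    have -> : dmu x0 (\bigcup_n F n) = 1.
      by rewrite /dmu; case: asboolP => // -[]; exists i0.
    apply: cvg_near_cst; exists i0.+1 => // n /= hn.
    rewrite dmu_sum //; case: asboolP => // -[]; by exists i0.
  have -> : dmu x0 (\bigcup_n F n) = 0.
    by rewrite /dmu; case: asboolP => // -[i _ Fi]; case: nF; exists i.
  apply: cvg_near_cst; apply: nearW => n.
  rewrite dmu_sum //; case: asboolP => // -[i _ Fi]; case: nF; by exists i.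
- by rewrite /dmu; case: (asboolP ([set: X] x0)) => // H; exfalso; exact: H.
- move=> E _; apply/eqP; rewrite eq_le; apply/andP; split.
    by apply/ereal_infP => _ [U [_ EU] <-]; apply: dmu_le; exact: EU.
  by apply: ereal_inf_lbound; exists E => //; split; [exact: Eop|].
- move=> U _; apply/eqP; rewrite eq_le; apply/andP; split.
    by apply: ereal_sup_ubound; exists U => //; split; [exact: Ecp|].
  by apply/ereal_supP => _ [K [_ KU] <-]; apply: dmu_le; exact: KU.
Qed.

End Dirac.

Section Main.
Variables (G : groupType) (X : topologicalType) (alpha : G -> X -> X).
Hypothesis act : is_continuous_action alpha.

Lemma injY_empty B : injY alpha set0 B.
Proof.
apply: (injY_mono (B := set0)) => //; apply: injY_id => //; exact: clopen0.
Qed.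

Lemma low_clopen (A : set (X * nat)) N : clopen A ->
  clopen (A `&` [set p | (p.2 < N)%N]).
Proof.
move=> cA; apply: clopenI => //.
rewrite (_ : [set p | _] = @snd X nat @^-1` [set n | (n < N)%N]) //.
apply: preimage_clopen; last exact: snd_cont.
by split; [exact: discrete_open|exact: discrete_closed].
Qed.

Lemma main_induction
  (DCi : forall D : set X, clopen D -> D !=set0 ->
     injY alpha ([set: X] `*` [set 0%N]) (D `*` [set 0%N]))
  (two : forall D : set X, clopen D -> D !=set0 ->
     exists E F, [/\ clopen E, clopen F, E !=set0, F !=set0 &
        E `&` F = set0 /\ E `|` F `<=` D])
  (m : nat) :
  forall N (A : set (X * nat)), clopen A -> (forall x n, A (x, n) -> (n < N)%N) ->
  forall D, clopen D -> D !=set0 -> injY alpha A (D `*` [set m]).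
Proof.
elim=> [|N IH] A cA bA D cD nD.
  rewrite (_ : A = set0); first exact: injY_empty.
  by apply/seteqP; split => // -[x n] /bA.
have [E [F [cE cF nE nF [EF EFD]]]] := two D cD nD.
pose Al := A `&` [set p | (p.2 < N)%N].
pose At := A `&` ([set: X] `*` [set N]).
have AE : A = Al `|` At.
  apply/seteqP; split => [[x n] Ap|p [[]//|[]//]].
  have := bA _ _ Ap; rewrite ltnS leq_eqVlt => /orP [/eqP nN|nN]; hnf.
    by right; split => //; split => //; rewrite nN.
  by left.
have i1 : injY alpha Al (E `*` [set m]).
  apply: IH => //; first exact: low_clopen.
  by move=> x n [].
have i2 : injY alpha At (F `*` [set m]).
  apply: (injY_sub (A := [set: X] `*` [set N])).
  - by move=> p [].
  - by apply: clopenI => //; exact: lev_clopen clopenT.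
  apply: (injY_trans act (injY_swap act N 0 clopenT)).
  apply: (injY_trans act (DCi F cF nF)).
  exact: injY_swap.
rewrite AE; apply: (injY_mono (B := (E `*` [set m]) `|` (F `*` [set m]))).
  by move=> [x n] [[/= Ex mE]|[/= Fx mE]]; split => //; apply: EFD; [left|right].
apply: injY_union => //.
  apply/seteqP; split => // -[x n] [[_ nN] [_ /= [_ nEq]]].
  by move: nN; rewrite /= nEq ltnn.
apply/seteqP; split => // -[x n] [[Ex _] [Fx _]].
by have : (E `&` F) x by []; rewrite EF.
Qed.

End Main.

Theorem lemmal (G : groupType) (X : topologicalType) (alpha : G -> X -> X) :
  countable [set: G] ->
  is_continuous_action alpha ->
  compact [set: X] -> hausdorff_space X -> zero_dim X ->
  ~ (exists mu, radon_probability mu /\ invariant_measure alpha mu) ->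
  (dynamical_comparison alpha <->
   (minimal_action alpha /\
    forall A B : set (X * nat), bclopen A -> bclopen B ->
      ~ equidec alpha A set0 -> ~ equidec alpha B set0 ->
      T_le alpha A B)).
Proof.
move=> _ act cT hX zd nomu; split.
- move=> DC.
  have notone x0 : ~ (forall x : X, x = x0).
    by move=> h; apply: nomu; exact: (singleton_measure alpha h cT).
  have DCi (D : set X) : clopen D -> D !=set0 ->
      injY alpha ([set: X] `*` [set 0%N]) (D `*` [set 0%N]).
    move=> cD [d Dd]; apply: (injY_of_Tle act); apply: DC => //.
    + exact: clopenT.
    + by exists d.
    + by exists d.
    + by move=> mu rp im; exfalso; apply: nomu; exists mu.
  split.
  + move=> x; apply/seteqP; split => // z _ B nB.
    move: nB; rewrite nbhsE => -[U [oU Uz] UB].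
    have [V [cV Vz VU]] := zd U z oU Uz.
    have := DCi V cV (ex_intro _ z Vz).
    move=> [J [c [g [s [_ _ _ H4]]]]].
    have := H4 (x, 0%N) (conj I (erefl 0%N)).
    rewrite /actY /= => -[Vg _].
    exists (alpha (g (c (x, 0%N))) x); split; first by exists (g (c (x, 0%N))).
    exact/UB/VU.
  + move=> A B [cA [N bAN]] [cB bB] _ nB.
    have [[b m] Bbm] : B !=set0.
      apply: contrapT => nB0; apply: nB.
      have B0 : B = set0 by apply/seteqP; split => // p Bp; apply: nB0; exists p.
      exists 0%N, (fun _ => set0), (fun _ => 1%g), (fun _ => id); split.
      * by move=> i; exact: clopen0.
      * by move=> _; exists id.
      * split; last by move=> [].
        by rewrite B0; apply/seteqP; split => // p [[]].
      * split; last by move=> [].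
        by apply/seteqP; split => // p [[]].
    have two (D : set X) : clopen D -> D !=set0 ->
        exists E F, [/\ clopen E, clopen F, E !=set0, F !=set0 &
          E `&` F = set0 /\ E `|` F `<=` D].
      move=> cD [d Dd].
      have [d2 [Dd2 neq]] : exists d2, D d2 /\ d2 <> d.
        apply: contrapT => nex; apply: (notone d) => x.
        have eqd y : D y -> y = d.
          by move=> Dy; apply: contrapT => ne; apply: nex; exists y.
        have [J [c [g [s [_ _ H3 H4]]]]] := DCi D cD (ex_intro _ d Dd).
        have phi y : actY alpha (g (c (y, 0%N))) (s (c (y, 0%N))) (y, 0%N) = (d, 0%N).
          have := H4 (y, 0%N) (conj I (erefl 0%N)).
          case: (actY _ _ _ _) => a k [/= Da ->]; by rewrite (eqd a Da).
        have := H3 (x, 0%N) (d, 0%N) (conj I (erefl 0%N)) (conj I (erefl 0%N)).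
        by rewrite !phi => /(_ erefl) [].
      have cl2 : closed [set d2] by apply: accessible_closed_set1; exact: hausdorff_accessible.
      have oU : open (~` [set d2]) by rewrite openC.
      have [V [cV Vd VU]] := zd (~` [set d2]) d oU (fun h => neq (esym h)).
      exists (D `&` V), (D `&` ~` V); split.
      * exact: clopenI.
      * by apply: clopenI => //; exact: (@clopenC _ V V cV).
      * by exists d.
      * by exists d2; split => // /VU; apply.
      * split; last by move=> y [[]|[]].
        by apply/seteqP; split => // y [[_ Vy] [_ nVy]].
    apply: (Tle_of_injY act); first by split.
    pose D := [set x | B (x, m)].
    apply: (injY_mono (B := D `*` [set m])); first by move=> [x n] [/= Dx ->].
    apply: (main_induction act DCi two m cA bAN).
      exact: slice_clopen.
    by exists b.
- move=> [mini H] A B cA cB nA nB _.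
  have bc (S : set X) : clopen S -> bclopen (at0 S).
    move=> cS; split; first exact: lev_clopen.
    by exists 1%N => x n [_ /= ->].
  have ne (S : set X) : S !=set0 -> ~ equidec alpha (at0 S) set0.
    move=> [a Sa] [n [P [g [s [_ _ [AU _] [BU _]]]]]].
    have : (\bigcup_i P i) (a, 0%N) by rewrite -AU.
    move=> [i _ Pi].
    have : (set0 : set (X * nat)) (actY alpha (g i) (s i) (a, 0%N)).
      by rewrite BU; exists i => //; exists (a, 0%N).
    by [].
  by apply: H; [exact: bc|exact: bc|exact: ne|exact: ne].
Qed.
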